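(* Let $\Omega$ be a completely regular Hausdorff space with Stone–Čech compactification $\beta\Omega$, and let $\mathcal{F}$ be a $z$-filter on $\Omega$. Let $\phi \in C(\Omega, \mathbb{C})$ (with $\phi^\beta:\beta\Omega\to\mathbb{C}\cup\{\infty\}$ its continuous extension and closures taken in $\mathbb{C}\cup\{\infty\}$), or let $\phi \in C(\Omega, X)$, $X$ a locally convex topological vector space, with $\overline{\phi(\Omega)}$ compact (with $\phi^\beta$ its Stone extension to $\beta\Omega$). Then \[ \phi^\beta\Big(\bigcap_{F \in \mathcal{F}}\mathrm{cl}_{\beta}F\Big) = \bigcap_{F \in \mathcal{F}} \phi^\beta(\mathrm{cl}_{\beta}F) = \bigcap_{F \in \mathcal{F}} \overline{\phi(F)}. \]
   Context: $\mathrm{cl}_\beta S$ denotes the closure of $S\subset\Omega$ in $\beta\Omega$. A zero-set of $\Omega$ is $h^{-1}(0)$ for some $h\in C(\Omega,\mathbb{R})$. A $z$-filter on $\Omega$ is a nonempty family $\mathcal{F}$ of zero-sets with $\emptyset\notin\mathcal{F}$, closed under finite intersections, and such that any zero-set containing a member of $\mathcal{F}$ belongs to $\mathcal{F}$. For $f$ continuous with relatively compact range, $f^\beta$ denotes the continuous (Stone) extension of $f$ to $\beta\Omega$ with $f^\beta|_\Omega=f$. *)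

(* Defs.v *)
From HB Require Import structures.
From mathcomp Require Import all_boot all_algebra.
From mathcomp Require Import all_classical all_reals all_analysis.
From mathcomp Require Import complex.
Import numFieldNormedType.Exports.

Set Implicit Arguments.
Unset Strict Implicit.
Unset Printing Implicit Defensive.

Local Open Scope classical_set_scope.
Local Open Scope ring_scope.

Definition Cplx (R : realType) : numFieldType := R[i].

Definition zero_set (R : realType) (Om : topologicalType) (Z : set Om) : Prop :=
  exists h : Om -> R, continuous h /\ Z = h @^-1` [set 0].

Definition z_filter (R : realType) (Om : topologicalType) (Fz : set (set Om)) : Prop :=
  [/\ (exists F, Fz F),
      (forall F, Fz F -> zero_set R F),
      ~ Fz set0,
      (forall F G, Fz F -> Fz G -> Fz (F `&` G)) &
      (forall F G, Fz F -> zero_set R G -> F `<=` G -> Fz G)].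

Definition embedding (S T : topologicalType) (e : S -> T) : Prop :=
  [/\ continuous e, injective e &
      (forall U : set S, open U -> exists V : set T, open V /\ e @^-1` V = U)].

Definition stone_cech (Om B : topologicalType) (e : Om -> B) : Prop :=
  [/\ compact [set: B], hausdorff_space B, embedding e,
      closure (range e) = [set: B] &
      (forall (K : topologicalType) (f : Om -> K),
          compact [set: K] -> hausdorff_space K -> continuous f ->
          exists g : B -> K, continuous g /\ (forall x, g (e x) = f x))].

Definition clb (Om B : topologicalType) (e : Om -> B) (S : set Om) : set B :=
  closure (e @` S).

(* Main.v *)
Require Import Defs.
From HB Require Import structures.
From mathcomp Require Import all_boot all_order all_algebra.
From mathcomp Require Import all_classical all_reals all_analysis.
From mathcomp Require Import complex lra ring.
Import numFieldNormedType.Exports.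
Import Order.TTheory GRing.Theory Num.Theory.
Local Open Scope classical_set_scope.
Local Open Scope ring_scope.
Local Open Scope complex_scope.

Lemma normC_ab (R : realType) (a b : R) :
  `|(a +i* b : Cplx R)| = (Num.sqrt (a ^+ 2 + b ^+ 2))%:C.
Proof. by rewrite normc_def. Qed.

Lemma ltC_real (R : realType) (x : R) (e : Cplx R) :
  (x%:C < e) = (complex.Im e == 0) && (x < complex.Re e).
Proof. by rewrite ltcE. Qed.

Lemma real_complex_cont (R : realType) :
  continuous (fun x : R => (x%:C : Cplx R)).
Proof.
move=> x; apply/cvgrPdist_lt => e e0.
have := e0; rewrite -[0]/((0:R)%:C) ltC_real => /andP[/eqP Ie Re0].
near=> t.
rewrite -rmorphB /= normC_ab expr0n /= addr0 sqrtr_sqr ltC_real Ie eqxx /=.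
near: t.
have := near_ball x _ Re0; apply: filterS => t; by rewrite -ball_normE.
Unshelve. all: by end_near. Qed.

Lemma lcC (R : realType) : locally_compact [set: Cplx R].
Proof.
pose f := fun p : R * R => ((p.1)%:C + (p.2)%:C * 'i : Cplx R).
have cf : continuous f.
  move=> p; apply: cvgD.
    apply: (cvg_comp fst (fun x : R => (x%:C : Cplx R))).
      exact: cvg_fst.
    exact: real_complex_cont.
  apply: cvgMr_tmp.
  apply: (cvg_comp snd (fun x : R => (x%:C : Cplx R))).
    exact: cvg_snd.
  exact: real_complex_cont.
move=> z _; rewrite withinET.
case: z => a b.
pose S := f @` (`[a - 1, a + 1] `*` `[b - 1, b + 1]).
have cS : compact S.
  apply: continuous_compact; first exact: continuous_subspaceT.
  by apply: compact_setX; exact: segment_compact.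
have nS : nbhs (a +i* b : Cplx R) S.
  apply/nbhs_ballP; exists 1 => //= -[c d].
  rewrite -ball_normE /= => H.
  have : (a - c) +i* (b - d) = (a +i* b : Cplx R) - (c +i* d) by [].
  move=> E; rewrite -E normC_ab -[1]/((1:R)%:C) ltC_real /= in H.
  have {}H : (a - c) ^+ 2 + (b - d) ^+ 2 < 1.
    by move: H => /andP[_]; rewrite -{1}sqrtr1 ltr_sqrt.
  exists (c, d).
    have h1 := sqr_ge0 (a - c); have h2 := sqr_ge0 (b - d).
    have ha : (a - c) * (a - c) < 1 by rewrite -expr2; lra.
    have hb : (b - d) * (b - d) < 1 by rewrite -expr2; lra.
    split; rewrite /= in_itv /=; apply/andP; split; nra.
  by apply/eqP; rewrite eq_complex /=; simpc.
exists S => //; split => //.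
apply: compact_closed cS; exact: norm_hausdorff.
Qed.
Local Close Scope complex_scope.

Lemma key (Om B Y : topologicalType) (e : Om -> B) (Fz : set (set Om))
  (phib : B -> Y) (g : Om -> Y) :
  compact [set: B] -> hausdorff_space Y -> continuous phib ->
  (forall x, phib (e x) = g x) ->
  (exists F, Fz F) -> (forall F G, Fz F -> Fz G -> Fz (F `&` G)) ->
  phib @` (\bigcap_(F in Fz) clb e F) = \bigcap_(F in Fz) (phib @` clb e F)
  /\ \bigcap_(F in Fz) (phib @` clb e F) = \bigcap_(F in Fz) closure (g @` F).
Proof.
move=> cB hY cphib phig Fz0 FzI; split.
  apply/seteqP; split.
    by move=> y [x Hx <-] F FzF; exists x => //; apply: Hx.
  move=> y Hy.
  pose S := fun F => clb e F `&` phib @^-1` [set y].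
  have clS : forall F, closed (S F).
    move=> F; apply: closedI; first exact: closed_closure.
    apply: preimage_closed; first by move=> x _; exact: cphib.
    exact/accessible_closed_set1/hausdorff_accessible.
  have fS : Filter (filter_from Fz S).
    apply: filter_from_filter => // F G FzF FzG.
    exists (F `&` G); first exact: FzI.
    move=> x [clx py]; split; split => //.
      by apply: closureS clx; apply: image_subset; apply: subIsetl.
    by apply: closureS clx; apply: image_subset; apply: subIsetr.
  have pS : ProperFilter (filter_from Fz S).
    apply: filter_from_proper => F FzF.
    by have [x clx py] := Hy F FzF; exists x.
  have [|p [_ clp]] := cB _ pS; first exact: filterT.
  have Sp : forall F, Fz F -> S F p.
    move=> F FzF; apply: clS => U nU.
    have := clp (S F) U; apply => //; by exists F.
  exists p.
    by move=> F FzF; case: (Sp F FzF).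
  by have [x _] := Fz0; case: (Sp _ (projT2 (cid Fz0))).
apply: eq_bigcapr => F FzF.
have ge : g @` F = phib @` (e @` F).
  apply/seteqP; split; first by move=> _ [x Fx <-]; exists (e x); [exists x|].
  by move=> _ [_ [x Fx <-] <-]; exists x.
apply/seteqP; split.
  move=> _ [x clx <-] V nV.
  have := clx (phib @^-1` V) (cphib x V nV).
  move=> [z [[w Fw ew] Vz]]; exists (phib z); split => //.
  by rewrite ge; exists z => //; exists w.
have cl : closed (phib @` clb e F).
  apply: compact_closed => //; apply: continuous_compact.
    by apply: continuous_subspaceT.
  apply: (subclosed_compact _ cB) => //; exact: closed_closure.
rewrite ((closure_id (phib @` clb e F)).1 cl).
apply: closureS.
by rewrite ge; apply: image_subset; apply: subset_closure.
Qed.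

Theorem lemma2p12 (R : realType) (Om B : topologicalType) (e : Om -> B)
    (Fz : set (set Om)) :
  hausdorff_space Om -> completely_regular_space Om ->
  stone_cech e -> z_filter R Fz ->
  (forall (phi : Om -> Cplx R)
          (phib : B -> one_point_compactification (Cplx R)),
      continuous phi -> continuous phib ->
      (forall x, phib (e x) = Some (phi x)) ->
      phib @` (\bigcap_(F in Fz) clb e F) = \bigcap_(F in Fz) (phib @` clb e F)
      /\ \bigcap_(F in Fz) (phib @` clb e F)
         = \bigcap_(F in Fz) closure ((fun x => Some (phi x)
             : one_point_compactification (Cplx R)) @` F))
  /\
  (forall (K : numFieldType) (X : tvsType K) (phi : Om -> X) (phib : B -> X),
      hausdorff_space X -> continuous phi -> compact (closure (range phi)) ->
      continuous phib -> (forall x, phib (e x) = phi x) ->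
      phib @` (\bigcap_(F in Fz) clb e F) = \bigcap_(F in Fz) (phib @` clb e F)
      /\ \bigcap_(F in Fz) (phib @` clb e F)
         = \bigcap_(F in Fz) closure (phi @` F)).
Proof.
move=> hOm crOm [cB hB emb de ext] [Fz0 Fzz nF0 FzI FzS]; split.
  move=> phi phib cphi cphib phie.
  apply: (@key _ _ _ e Fz phib (fun x => Some (phi x)) cB _ cphib phie Fz0 FzI).
  apply: one_point_compactification_hausdorff; first exact: lcC.
  exact: norm_hausdorff.
move=> K X phi phib hX cphi _ cphib phie.
exact: key cB hX cphib phie Fz0 FzI.
Qed.
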